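(* For each $\star\in\{\varepsilon,\sigma_0,*,\bowtie\}$, the edge-colored posets $L^{\mathrm{skew}}_{A_{n-1}}((P/Q)^\star)$ and $L^{\mathrm{skew}}_{A_{n-1}}(P/Q)^\star$ are isomorphic (by an isomorphism preserving order and edge colors).
   Context: Fix integers $m\ge n\ge 2$ and weakly decreasing $m$-tuples of nonnegative integers $P=(P_1,\dots,P_m)$ and $Q=(Q_1,\dots,Q_m)$ with $Q_r\le P_r$ for all $r$. The skew shape $P/Q$ is the set of cells $(r,c)$ (row $r$, column $c$, matrix convention) with $Q_r<c\le P_r$; assume no column of $P/Q$ contains more than $n$ cells. For any finite set of cells forming a skew shape (after translation), $L^{\mathrm{skew}}_{A_{n-1}}(\cdot)$ is the set of semistandard fillings with entries in $\{1,\dots,n\}$ (weakly increasing along rows, strictly increasing down columns), ordered by $S\le T$ iff $S_{r,c}\ge T_{r,c}$ for all cells; the covering $S\to T$ where $S,T$ differ only in cell $(r,c)$ with $S_{r,c}=T_{r,c}+1$ gets color $T_{r,c}\in\{1,\dots,n-1\}$. Shape operations: $(P/Q)^\varepsilon:=P/Q$; $(P/Q)^{\sigma_0}$: for each column of $P/Q$ whose cells are in rows $a+1,\dots,a+k$ ($k\ge1$), take the cells of that column in rows $a+k+1,\dots,a+n$ (the empty columns of $P/Q$ contribute nothing); $(P/Q)^*$: rotate $(P/Q)^{\sigma_0}$ by $180^\circ$; $(P/Q)^{\bowtie}$: rotate $P/Q$ by $180^\circ$ (all regarded as skew shapes after translation). Poset operations on a finite poset $R$ with edges colored by $\{1,\dots,n-1\}$: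 $R^\varepsilon:=R$; $R^{\sigma_0}$: same poset, each edge color $i$ replaced by $n-i$; $R^*$: the dual poset $\{t^*\}$ with an edge $t^*\xrightarrow{i}s^*$ for each edge $s\xrightarrow{i}t$ of $R$; $R^{\bowtie}:=(R^{\sigma_0})^*$. *)

(* Defs.v *)
(* cells are pairs of integers (row, column), matrix convention. *)
From Stdlib Require Import ZArith Arith List Bool.
Import ListNotations.
Open Scope Z_scope.

Definition cell := (Z * Z)%type.

Definition shape := cell -> Prop.

(* P_r for 1 <= r <= m, stored 0-indexed in a list. *)
Definition row_val (P : list nat) (r : Z) : Z :=
  Z.of_nat (nth (Z.to_nat r - 1)%nat P 0%nat).

Definition skew (m : nat) (P Q : list nat) : shape :=
  fun x => 1 <= fst x <= Z.of_nat m /\ row_val Q (fst x) < snd x <= row_val P (fst x).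

Definition shape_sigma0 (n : nat) (S : shape) : shape :=
  fun x => exists (a : Z) (k : nat), (1 <= k)%nat /\
    (forall r', S (r', snd x) <-> a + 1 <= r' <= a + Z.of_nat k) /\
    a + Z.of_nat k + 1 <= fst x <= a + Z.of_nat n.

(* rotation by 180 degrees (translation is irrelevant below) *)
Definition shape_rot (S : shape) : shape := fun x => S (- fst x, - snd x).

Inductive op := Eps | Sig0 | Star | Bowtie.

Definition shape_op (n : nat) (o : op) (S : shape) : shape :=
  match o with
  | Eps => S
  | Sig0 => shape_sigma0 n S
  | Star => shape_rot (shape_sigma0 n S)
  | Bowtie => shape_rot S
  end.

Record ecposet := ECPoset {
  carrier : Type;
  elem : carrier -> Prop;
  le : carrier -> carrier -> Prop;
  edge : carrier -> nat -> carrier -> Prop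
}.

(* L^skew_{A_{n-1}}(S): semistandard fillings of S with entries in {1..n},
   represented as functions cell -> nat vanishing outside S. *)
Definition filling := cell -> nat.

Definition is_ssyt (n : nat) (S : shape) (T : filling) : Prop :=
  (forall x, ~ S x -> T x = 0%nat) /\
  (forall x, S x -> (1 <= T x <= n)%nat) /\
  (forall r c c', S (r, c) -> S (r, c') -> c < c' -> (T (r, c) <= T (r, c'))%nat) /\
  (forall r r' c, S (r, c) -> S (r', c) -> r < r' -> (T (r, c) < T (r', c))%nat).

Definition Lskew (n : nat) (S : shape) : ecposet :=
  {| carrier := filling;
     elem := is_ssyt n S;
     le := fun A B => forall x, S x -> (B x <= A x)%nat;
     edge := fun A i B => exists x, S x /\ A x = (B x + 1)%nat /\ i = B x /\
                           (forall y, y <> x -> A y = B y) |}.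

Definition poset_sigma0 (n : nat) (R : ecposet) : ecposet :=
  {| carrier := carrier R; elem := elem R; le := le R;
     edge := fun s i t => exists j, edge R s j t /\ i = (n - j)%nat |}.

Definition poset_dual (R : ecposet) : ecposet :=
  {| carrier := carrier R; elem := elem R;
     le := fun s t => le R t s;
     edge := fun s i t => edge R t i s |}.

Definition poset_op (n : nat) (o : op) (R : ecposet) : ecposet :=
  match o with
  | Eps => R
  | Sig0 => poset_sigma0 n R
  | Star => poset_dual R
  | Bowtie => poset_dual (poset_sigma0 n R)
  end.

Definition ec_iso (A B : ecposet) : Prop :=
  exists f : carrier A -> carrier B,
    (forall x, elem A x -> elem B (f x)) /\
    (forall x y, elem A x -> elem A y -> f x = f y -> x = y) /\
    (forall y, elem B y -> exists x, elem A x /\ f x = y) /\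
    (forall x y, elem A x -> elem A y -> (le A x y <-> le B (f x) (f y))) /\
    (forall x y i, elem A x -> elem A y -> (edge A x i y <-> edge B (f x) i (f y))).

Definition weakly_decr (P : list nat) : Prop :=
  forall i j, (i <= j)%nat -> (j < length P)%nat -> (nth j P 0 <= nth i P 0)%nat.

Definition col_count (m : nat) (P Q : list nat) (c : nat) : nat :=
  length (filter (fun r => andb (Nat.ltb (nth r Q 0%nat) c ) (Nat.leb c (nth r P 0%nat)))
                 (seq 0 m)).

(* Main.v *)
Require Import Defs.
From Stdlib Require Import ZArith Arith List.

From Stdlib Require Import ZArith Arith List Lia Bool FunctionalExtensionality Classical.
Open Scope Z_scope.

Section Gen.
Variable n : nat.

Fixpoint lf (p : nat -> bool) (fuel v : nat) : nat :=
  match fuel with O => v | S f => if p v then v else lf p f (S v) end.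
Definition least p := lf p n 0.

Lemma up_lem (p : nat -> bool) N :
  (forall w, (w < N)%nat -> p w = true -> p (S w) = true) ->
  forall k w, (w + k <= N)%nat -> p w = true -> p (w + k)%nat = true.
Proof.
  intros Hup k; induction k as [|k IH]; intros w Hw Hp.
  - rewrite Nat.add_0_r; auto.
  - replace (w + S k)%nat with (S (w + k)) by lia. apply Hup; [lia|]. apply IH; auto; lia.
Qed.

Lemma lf_spec p N :
  (forall w, (w < N)%nat -> p w = true -> p (S w) = true) ->
  forall fuel v, (fuel + v = N)%nat -> p N = true ->
  (v <= lf p fuel v)%nat /\ forall w, (v <= w <= N)%nat -> ((lf p fuel v <= w)%nat <-> p w = true).
Proof.
  intros Hup. induction fuel as [|f IH]; intros v Hv HN; simpl.
  - split; [lia|]. intros w Hw. assert (w = N) by lia. subst. split; auto; lia.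
  - destruct (p v) eqn:E.
    + split; [lia|]. intros w Hw. split; intros H; [|lia].
      replace w with (v + (w - v))%nat by lia. apply (up_lem p N Hup); auto; lia.
    + destruct (IH (S v)) as [H1 H2]; [lia|auto|]. split; [lia|]. intros w Hw.
      destruct (Nat.eq_dec w v) as [->|Hne].
      * split; intros; [lia|congruence].
      * apply H2; lia.
Qed.

Lemma least_spec p :
  (forall w, (w < n)%nat -> p w = true -> p (S w) = true) -> p n = true ->
  (least p <= n)%nat /\ forall w, (w <= n)%nat -> ((least p <= w)%nat <-> p w = true).
Proof.
  intros Hup Hn. destruct (lf_spec p n Hup n 0) as [_ H]; [lia|auto|].
  split.
  - apply H; auto; lia.
  - intros w Hw; apply H; lia.
Qed.

Definition sys (B : Z -> nat -> bool) (lo hi : Z) : Prop :=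
  (forall r0 r w, (w <= n)%nat -> r0 <= r -> B r w = true -> B r0 w = true) /\
  (forall r w, (w < n)%nat -> B r (S w) = true -> B (r-1) w = true) /\
  (forall r w, (w < n)%nat -> B r w = true -> B r (S w) = true) /\
  (forall r, B r n = true <-> r <= hi) /\
  (forall r, B r 0%nat = true <-> r <= lo).

Lemma sys_lo B lo hi : sys B lo hi -> forall r w, (w <= n)%nat -> r <= lo -> B r w = true.
Proof.
  intros (S1&S2&S3&S4&S5) r w Hw Hr.
  replace w with (0 + w)%nat by lia. apply (up_lem (B r) n (S3 r)); [lia|]. apply S5; auto.
Qed.

Lemma sys_hi B lo hi : sys B lo hi -> forall r w, (w <= n)%nat -> B r w = true -> r <= hi.
Proof.
  intros (S1&S2&S3&S4&S5) r w Hw Hr. apply S4.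
  replace n with (w + (n - w))%nat by lia. apply (up_lem (B r) n (S3 r)); auto; lia.
Qed.

Lemma sys_ext B1 B2 lo0 hi0 : (forall r w, (w <= n)%nat -> B1 r w = B2 r w) ->
  sys B1 lo0 hi0 -> sys B2 lo0 hi0.
Proof.
  intros E (S1&S2&S3&S4&S5). repeat split.
  - intros r0 r w Hw Hr H. rewrite <- E in *; auto. eauto.
  - intros r w Hw H. rewrite <- E in *; try lia. eauto.
  - intros r w Hw H. rewrite <- E in *; try lia. eauto.
  - intros H. rewrite <- E in H; auto. apply S4; auto.
  - intros H. rewrite <- E; auto. apply S4; auto.
  - intros H. rewrite <- E in H; try lia. apply S5; auto.
  - intros H. rewrite <- E; try lia. apply S5; auto.
Qed.

Definition trB (B : Z -> nat -> bool) : Z -> nat -> bool :=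
  fun r v => B (r - Z.of_nat v) (n - v)%nat.
Definition invB (B : Z -> nat -> bool) : Z -> nat -> bool :=
  fun r w => B (r + Z.of_nat (n - w)) (n - w)%nat.

Lemma sys_tr B lo hi : sys B lo hi -> sys (trB B) hi (lo + Z.of_nat n).
Proof.
  intros (S1&S2&S3&S4&S5). unfold trB. repeat split.
  - intros r0 r w Hw Hr H. apply S1 with (r - Z.of_nat w); auto; lia.
  - intros r w Hw H. assert (E: (n - w = S (n - S w))%nat) by lia. rewrite E.
    replace (r - 1 - Z.of_nat w) with (r - Z.of_nat (S w)) by lia. apply S3; [lia|auto].
  - intros r w Hw H. assert (E: (n - w = S (n - S w))%nat) by lia. rewrite E in H.
    replace (r - Z.of_nat (S w)) with (r - Z.of_nat w - 1) by lia. apply S2; [lia|auto].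
  - intros H. rewrite Nat.sub_diag in H. apply S5 in H. lia.
  - intros H. rewrite Nat.sub_diag. apply S5. lia.
  - intros H. rewrite Nat.sub_0_r in H. apply S4 in H. lia.
  - intros H. rewrite Nat.sub_0_r. apply S4. lia.
Qed.

Lemma sys_inv B lo hi lo' : sys B lo hi -> lo' = hi - Z.of_nat n -> sys (invB B) lo' lo.
Proof.
  intros (S1&S2&S3&S4&S5) Hl. unfold invB. repeat split.
  - intros r0 r w Hw Hr H. apply S1 with (r + Z.of_nat (n - w)); auto; lia.
  - intros r w Hw H. assert (E: (n - w = S (n - S w))%nat) by lia. rewrite E.
    replace (r - 1 + Z.of_nat (S (n - S w))) with (r + Z.of_nat (n - S w)) by lia.
    apply S3; [lia|auto].
  - intros r w Hw H. assert (E: (n - w = S (n - S w))%nat) by lia. rewrite E in H.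
    replace (r + Z.of_nat (n - S w)) with (r + Z.of_nat (S (n - S w)) - 1) by lia.
    apply S2; [lia|auto].
  - intros H. rewrite Nat.sub_diag in H. apply S5 in H. lia.
  - intros H. rewrite Nat.sub_diag. apply S5. lia.
  - intros H. rewrite Nat.sub_0_r in H. apply S4 in H. lia.
  - intros H. rewrite Nat.sub_0_r. apply S4. lia.
Qed.

Lemma inv_tr B r v : (v <= n)%nat -> invB (trB B) r v = B r v.
Proof.
  intros Hv. unfold invB, trB. f_equal; lia.
Qed.

Lemma tr_inv B r v : (v <= n)%nat -> trB (invB B) r v = B r v.
Proof.
  intros Hv. unfold invB, trB. f_equal; lia.
Qed.

Definition BT (T : filling) (lo hi c : Z) : Z -> nat -> bool :=
  fun r w => (r <=? lo) || ((lo <? r) && (r <=? hi) && (T (r,c) <=? w)%nat).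

Lemma BT_true T lo hi c r w :
  BT T lo hi c r w = true <-> r <= lo \/ (lo < r <= hi /\ (T (r,c) <= w)%nat).
Proof.
  unfold BT. rewrite orb_true_iff, !andb_true_iff, Z.leb_le, Z.ltb_lt, Z.leb_le, Nat.leb_le.
  tauto.
Qed.
End Gen.
Section Col.
Variable n : nat.
Variable K : Z -> bool.
Variables lo hi : Z -> Z.
Hypothesis HC : forall c, K c = true -> lo c <= hi c.
Hypothesis HM : forall c1 c2, K c1 = true -> K c2 = true -> c1 < c2 -> lo c2 <= lo c1 /\ hi c2 <= hi c1.

Definition Sh : shape := fun x => K (snd x) = true /\ lo (snd x) < fst x <= hi (snd x).
Definition Shb (x : cell) := K (snd x) && (lo (snd x) <? fst x) && (fst x <=? hi (snd x)).
Lemma Shb_spec x : Shb x = true <-> Sh x.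
Proof. unfold Shb, Sh. rewrite !andb_true_iff, Z.ltb_lt, Z.leb_le. tauto. Qed.

Definition BTc T c := BT T (lo c) (hi c) c.

Lemma ssyt_sys T : is_ssyt n Sh T -> forall c, K c = true -> sys n (BTc T c) (lo c) (hi c).
Proof.
  intros (V&R&Rw&Cl) c Kc. pose proof (HC c Kc) as Hlh. unfold BTc. repeat split.
  - intros r0 r w Hw Hr H. apply BT_true in H. apply BT_true.
    destruct H as [H|[H1 H2]]; [left; lia|].
    destruct (Z_le_gt_dec r0 (lo c)); [left; lia|right]. split; [lia|].
    destruct (Z.eq_dec r0 r); [subst; auto|].
    assert (T (r0,c) < T (r,c))%nat; [|lia]. apply Cl; try (unfold Sh; simpl; split; [auto|]); lia.
  - intros r w Hw H. apply BT_true in H. apply BT_true.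
    destruct H as [H|[H1 H2]]; [left; lia|].
    destruct (Z_le_gt_dec (r-1) (lo c)); [left; lia|right]. split; [lia|].
    assert (Nat.lt (T (r-1,c)) (T (r,c))); [|lia]. apply Cl; try (unfold Sh; simpl; split; [auto|]); lia.
  - intros r w Hw H. apply BT_true in H. apply BT_true. destruct H; [left|right]; lia.
  - intros H. apply BT_true in H. lia.
  - intros H. apply BT_true. destruct (Z_le_gt_dec r (lo c)); [left; lia|right].
    split; [lia|]. apply R. try (unfold Sh; simpl; split; [auto|]); lia.
  - intros H. apply BT_true in H. destruct H as [H|[H1 H2]]; auto.
    assert (1 <= T (r,c))%nat; [|lia]. apply R. try (unfold Sh; simpl; split; [auto|]); lia.
  - intros H. apply BT_true. left; auto.
Qed.

Lemma ssyt_incl T : is_ssyt n Sh T -> forall c1 c2, K c1 = true -> K c2 = true -> c1 < c2 ->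
  forall r w, BTc T c2 r w = true -> BTc T c1 r w = true.
Proof.
  intros (V&R&Rw&Cl) c1 c2 K1 K2 Hc r w H. destruct (HM c1 c2 K1 K2 Hc) as [M1 M2].
  unfold BTc in *. apply BT_true in H. apply BT_true.
  destruct H as [H|[H1 H2]]; [left; lia|].
  destruct (Z_le_gt_dec r (lo c1)); [left; lia|right]. split; [lia|].
  assert (T (r,c1) <= T (r,c2))%nat; [|lia]. apply Rw; try (unfold Sh; simpl; split; [auto|]); lia.
Qed.

Lemma sys_ssyt T : (forall x, ~ Sh x -> T x = 0%nat) ->
  (forall c, K c = true -> sys n (BTc T c) (lo c) (hi c)) ->
  (forall c1 c2, K c1 = true -> K c2 = true -> c1 < c2 -> forall r w, (w <= n)%nat ->
      BTc T c2 r w = true -> BTc T c1 r w = true) ->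
  is_ssyt n Sh T.
Proof.
  intros V Sy In.
  assert (Rg: forall x, Sh x -> (1 <= T x <= n)%nat).
  { intros [r c] [Kc Hr]; simpl in *. destruct (Sy c Kc) as (S1&S2&S3&S4&S5).
    assert (A: BTc T c r n = true) by (apply S4; lia).
    unfold BTc in A; apply BT_true in A.
    split; [|destruct A; [lia|tauto]].
    destruct (T (r,c)) eqn:E; [|lia].
    assert (B0: BTc T c r 0 = true). { unfold BTc; apply BT_true. right. rewrite E. split; [lia|lia]. }
    apply S5 in B0. lia. }
  split; [auto|split; [auto|split]].
  - intros r c c' H1 H2 Hc. destruct H1 as [K1 H1], H2 as [K2 H2]; simpl in *.
    pose proof (Rg (r,c') (conj K2 H2)).
    assert (A: BTc T c' r (T (r,c')) = true). { unfold BTc; apply BT_true; right; split; [lia|lia]. }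
    apply (In c c' K1 K2 Hc r) in A; [|lia]. unfold BTc in A; apply BT_true in A. lia.
  - intros r r' c H1 H2 Hr. destruct H1 as [K1 H1], H2 as [K2 H2]; simpl in *.
    pose proof (Rg (r',c) (conj K2 H2)). destruct (Sy c K1) as (S1&S2&S3&S4&S5).
    destruct (T (r',c)) as [|w] eqn:E; [lia|].
    assert (A: BTc T c r' (S w) = true). { unfold BTc; apply BT_true; right; split; [lia|lia]. }
    apply S2 in A; [|lia]. apply (S1 r) in A; [|lia|lia].
    unfold BTc in A; apply BT_true in A. lia.
Qed.

Definition mapB (B : Z -> Z -> nat -> bool) : filling :=
  fun x => if Shb x then least n (B (snd x) (fst x)) else 0%nat.

Lemma BT_mapB B : (forall c, K c = true -> sys n (B c) (lo c) (hi c)) ->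
  forall c, K c = true -> forall r w, (w <= n)%nat -> BTc (mapB B) c r w = B c r w.
Proof.
  intros Sy c Kc r w Hw. pose proof (HC c Kc) as Hlh. apply eq_iff_eq_true. unfold BTc. rewrite BT_true.
  destruct (Z_le_gt_dec r (lo c)).
  - split; [intros _|auto]. apply (sys_lo n _ _ _ (Sy c Kc)); auto.
  - destruct (Z_le_gt_dec r (hi c)).
    + unfold mapB. assert (Shb (r,c) = true) as E by (apply Shb_spec; try (unfold Sh; simpl; split; [auto|]); lia).
      rewrite E. simpl. destruct (Sy c Kc) as (S1&S2&S3&S4&S5).
      destruct (least_spec n (B c r)) as [_ Hl]; auto. apply S4; auto.
      rewrite <- Hl; auto. split; [intros [H|[_ H]]; [lia|auto]|intros H; right; split; [lia|auto]].
    + split; [intros [H|[H _]]; lia|]. intros H. apply (sys_hi n _ _ _ (Sy c Kc)) in H; auto. lia.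
Qed.

Lemma mapB_ssyt B : (forall c, K c = true -> sys n (B c) (lo c) (hi c)) ->
  (forall c1 c2, K c1 = true -> K c2 = true -> c1 < c2 -> forall r w, (w <= n)%nat ->
      B c2 r w = true -> B c1 r w = true) ->
  is_ssyt n Sh (mapB B).
Proof.
  intros Sy In. apply sys_ssyt.
  - intros x Hx. unfold mapB. destruct (Shb x) eqn:E; auto. apply Shb_spec in E. tauto.
  - intros c Kc. apply (sys_ext n (B c)); auto. intros r w Hw. symmetry. apply BT_mapB; auto.
  - intros c1 c2 K1 K2 Hc r w Hw. rewrite !BT_mapB; auto. apply In; auto.
Qed.

Lemma ssyt_le T1 T2 : is_ssyt n Sh T1 -> is_ssyt n Sh T2 ->
  ((forall x, Sh x -> (T2 x <= T1 x)%nat) <->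
   (forall c, K c = true -> forall r w, (w <= n)%nat -> BTc T1 c r w = true -> BTc T2 c r w = true)).
Proof.
  intros H1 H2. split.
  - intros H c Kc r w Hw A. unfold BTc in *. apply BT_true in A; apply BT_true.
    destruct A as [A|[A1 A2]]; [left; auto|right; split; auto].
    assert (T2 (r,c) <= T1 (r,c))%nat; [|lia]. apply H. unfold Sh; simpl; auto.
  - intros H [r c] [Kc Hr]; simpl in *. destruct H1 as (_&R1&_).
    pose proof (R1 (r,c) (conj Kc Hr)).
    assert (A: BTc T1 c r (T1 (r,c)) = true) by (unfold BTc; apply BT_true; right; split; [lia|lia]).
    apply H in A; auto; [|lia]. unfold BTc in A; apply BT_true in A. lia.
Qed.

Lemma ssyt_det T1 T2 : is_ssyt n Sh T1 -> is_ssyt n Sh T2 ->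
  (forall c, K c = true -> forall r w, (w <= n)%nat -> BTc T1 c r w = BTc T2 c r w) -> T1 = T2.
Proof.
  intros H1 H2 E. apply functional_extensionality. intros x.
  destruct (Shb x) eqn:Sx.
  - apply Shb_spec in Sx.
    assert (A: (T2 x <= T1 x)%nat).
    { apply (proj2 (ssyt_le T1 T2 H1 H2)); auto. intros c Kc r w Hw; rewrite E; auto. }
    assert (B: (T1 x <= T2 x)%nat).
    { apply (proj2 (ssyt_le T2 T1 H2 H1)); auto. intros c Kc r w Hw; rewrite E; auto. }
    lia.
  - assert (~ Sh x) by (rewrite <- Shb_spec; congruence).
    destruct H1 as (V1&_), H2 as (V2&_). rewrite V1, V2; auto.
Qed.

Definition RHS T1 T2 j := (1 <= j < n)%nat /\ exists c r, K c = true /\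
  BTc T1 c r j = false /\ BTc T2 c r j = true /\
  forall c' r' w', K c' = true -> (w' <= n)%nat -> ~ (c' = c /\ r' = r /\ w' = j) ->
     BTc T1 c' r' w' = BTc T2 c' r' w'.

Lemma ssyt_edge T1 T2 j : is_ssyt n Sh T1 -> is_ssyt n Sh T2 ->
  ((exists x, Sh x /\ T1 x = (T2 x + 1)%nat /\ j = T2 x /\ forall y, y <> x -> T1 y = T2 y)
   <-> RHS T1 T2 j).
Proof.
  intros H1 H2. pose proof H1 as (V1&R1&_). pose proof H2 as (V2&R2&_). split.
  - intros [[r c] [[Kc Hr] [E1 [-> Ey]]]]; simpl in *.
    pose proof (R1 (r,c) (conj Kc Hr)). pose proof (R2 (r,c) (conj Kc Hr)).
    split; [lia|]. exists c, r. split; [auto|split; [|split]].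
    + apply not_true_is_false. unfold BTc; rewrite BT_true. lia.
    + unfold BTc; rewrite BT_true. lia.
    + intros c' r' w' Kc' Hw' Hne. unfold BTc. apply eq_iff_eq_true. rewrite !BT_true.
      destruct (Z.eq_dec c' c) as [->|Hc]; [destruct (Z.eq_dec r' r) as [->|Hr']|].
      * assert (w' <> T2 (r,c)) by tauto. rewrite E1. split; intros; lia.
      * rewrite (Ey (r',c)); [tauto|]. intros Q; inversion Q; tauto.
      * rewrite (Ey (r',c')); [tauto|]. intros Q; inversion Q; tauto.
  - intros [Hj [c [r [Kc [B1 [B2 Hoth]]]]]].
    unfold BTc in B1, B2. rewrite <- not_true_iff_false, BT_true in B1. rewrite BT_true in B2.
    assert (Hr: lo c < r <= hi c) by lia.
    assert (Sx: Sh (r,c)) by (unfold Sh; simpl; auto).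
    pose proof (R1 _ Sx). pose proof (R2 _ Sx).
    assert (E1: T1 (r,c) = S j).
    { destruct (Nat.eq_dec (T1 (r,c)) (S j)) as [e|ne]; auto.
      pose proof (Hoth c r (S j) Kc ltac:(lia) ltac:(lia)) as Q.
      unfold BTc in Q. apply eq_iff_eq_true in Q. rewrite !BT_true in Q. lia. }
    assert (E2: T2 (r,c) = j).
    { destruct (Nat.eq_dec (T2 (r,c)) j) as [e|ne]; auto.
      pose proof (Hoth c r (j - 1)%nat Kc ltac:(lia) ltac:(lia)) as Q.
      unfold BTc in Q. apply eq_iff_eq_true in Q. rewrite !BT_true in Q. lia. }
    exists (r,c). split; [auto|split; [lia|split; [auto|]]].
    intros [r' c'] Hne.
    destruct (Shb (r',c')) eqn:Sy.
    + apply Shb_spec in Sy. destruct Sy as [Ky Hy]; simpl in *.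
      assert (Hne2: ~ (c' = c /\ r' = r)) by (intros [-> ->]; auto).
      pose proof (R1 (r',c') (conj Ky Hy)). pose proof (R2 (r',c') (conj Ky Hy)).
      pose proof (Hoth c' r' (T1 (r',c')) Ky ltac:(lia) ltac:(tauto)) as Q1.
      pose proof (Hoth c' r' (T2 (r',c')) Ky ltac:(lia) ltac:(tauto)) as Q2.
      unfold BTc in Q1, Q2. apply eq_iff_eq_true in Q1, Q2. rewrite !BT_true in Q1, Q2. lia.
    + assert (~ Sh (r',c')) by (rewrite <- Shb_spec; congruence). rewrite V1, V2; auto.
Qed.
End Col.
Section Main.
Variable n : nat.
Variables a b : Z -> Z.
Hypothesis Hab : forall c, a c <= b c.
Hypothesis Hbn : forall c, b c <= a c + Z.of_nat n.
Hypothesis Hmono : forall c1 c2, c1 < c2 -> a c2 <= a c1 /\ b c2 <= b c1.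

Definition Km c := a c <? b c.
Definition an c := a c + Z.of_nat n.

Lemma HCS : forall c, Km c = true -> a c <= b c. Proof. auto. Qed.
Lemma HCS' : forall c, Km c = true -> b c <= an c. Proof. intros; unfold an; auto. Qed.
Lemma HMS : forall c1 c2, Km c1 = true -> Km c2 = true -> c1 < c2 -> a c2 <= a c1 /\ b c2 <= b c1.
Proof. auto. Qed.
Lemma HMS' : forall c1 c2, Km c1 = true -> Km c2 = true -> c1 < c2 -> b c2 <= b c1 /\ an c2 <= an c1.
Proof. intros c1 c2 _ _ H; destruct (Hmono c1 c2 H); unfold an; lia. Qed.

Definition BU U c := BTc b an U c.
Definition BS T c := BTc a b T c.
Definition fm U := mapB n Km a b (fun c => invB n (BU U c)).
Definition gm T := mapB n Km b an (fun c => trB n (BS T c)).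
Definition Sm := Sh Km a b.
Definition Sp := Sh Km b an.

Lemma f_sys U : is_ssyt n Sp U -> forall c, Km c = true -> sys n (invB n (BU U c)) (a c) (b c).
Proof.
  intros HU c Kc. apply sys_inv with (hi := an c).
  - apply (ssyt_sys n Km b an HCS' U HU c Kc).
  - unfold an; lia.
Qed.

Lemma g_sys T : is_ssyt n Sm T -> forall c, Km c = true -> sys n (trB n (BS T c)) (b c) (an c).
Proof.
  intros HT c Kc. apply (sys_tr n _ (a c) (b c)). apply (ssyt_sys n Km a b HCS T HT c Kc).
Qed.

Lemma f_ssyt U : is_ssyt n Sp U -> is_ssyt n Sm (fm U).
Proof.
  intros HU. apply mapB_ssyt; [exact HCS|apply f_sys; auto|].
  intros c1 c2 K1 K2 Hc r w Hw. unfold invB. apply (ssyt_incl n Km b an HMS' U HU c1 c2 K1 K2 Hc).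
Qed.

Lemma g_ssyt T : is_ssyt n Sm T -> is_ssyt n Sp (gm T).
Proof.
  intros HT. apply mapB_ssyt; [exact HCS'|apply g_sys; auto|].
  intros c1 c2 K1 K2 Hc r w Hw. unfold trB. apply (ssyt_incl n Km a b HMS T HT c1 c2 K1 K2 Hc).
Qed.

Lemma f_BT U : is_ssyt n Sp U -> forall c, Km c = true -> forall r w, (w <= n)%nat ->
  BS (fm U) c r w = invB n (BU U c) r w.
Proof. intros HU c Kc r w Hw. unfold BS, fm. apply (BT_mapB n Km a b HCS); auto. apply f_sys; auto. Qed.

Lemma g_BT T : is_ssyt n Sm T -> forall c, Km c = true -> forall r w, (w <= n)%nat ->
  BU (gm T) c r w = trB n (BS T c) r w.
Proof. intros HT c Kc r w Hw. unfold BU, gm. apply (BT_mapB n Km b an HCS'); auto. apply g_sys; auto. Qed.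

Lemma BU_f U : is_ssyt n Sp U -> forall c, Km c = true -> forall r v, (v <= n)%nat ->
  BU U c r v = BS (fm U) c (r - Z.of_nat v) (n - v)%nat.
Proof.
  intros HU c Kc r v Hv. rewrite f_BT; auto; [|lia].
  change (BU U c r v = trB n (invB n (BU U c)) r v). rewrite tr_inv; auto.
Qed.

Lemma BS_f U : is_ssyt n Sp U -> forall c, Km c = true -> forall r w, (w <= n)%nat ->
  BS (fm U) c r w = BU U c (r + Z.of_nat (n - w)) (n - w)%nat.
Proof. intros HU c Kc r w Hw. rewrite f_BT; auto. Qed.

Lemma fg T : is_ssyt n Sm T -> fm (gm T) = T.
Proof.
  intros HT. apply (ssyt_det n Km a b); auto. apply f_ssyt, g_ssyt; auto.
  intros c Kc r w Hw. fold (BS (fm (gm T)) c r w). fold (BS T c r w).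
  rewrite f_BT; auto; [|apply g_ssyt; auto]. unfold invB at 1. rewrite g_BT; auto; [|lia].
  change (invB n (trB n (BS T c)) r w = BS T c r w). apply inv_tr; auto.
Qed.

Lemma f_inj U1 U2 : is_ssyt n Sp U1 -> is_ssyt n Sp U2 -> fm U1 = fm U2 -> U1 = U2.
Proof.
  intros H1 H2 E. apply (ssyt_det n Km b an); auto.
  intros c Kc r w Hw. fold (BU U1 c r w). fold (BU U2 c r w).
  rewrite (BU_f U1), (BU_f U2), E; auto.
Qed.

Lemma main_iso : ec_iso (Lskew n Sp) (poset_sigma0 n (Lskew n Sm)).
Proof.
  exists fm. simpl. split; [|split; [|split; [|split]]].
  - exact f_ssyt.
  - exact f_inj.
  - intros T HT. exists (gm T). split; [apply g_ssyt; auto|apply fg; auto].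
  - intros U1 U2 H1 H2. pose proof (f_ssyt U1 H1) as F1. pose proof (f_ssyt U2 H2) as F2.
    rewrite (ssyt_le n Km b an U1 U2 H1 H2), (ssyt_le n Km a b (fm U1) (fm U2) F1 F2).
    split.
    + intros H c Kc r w Hw. fold (BS (fm U1) c r w). fold (BS (fm U2) c r w).
      rewrite !BS_f; auto. apply H; auto; lia.
    + intros H c Kc r w Hw. fold (BU U1 c r w). fold (BU U2 c r w).
      rewrite (BU_f U1), (BU_f U2); auto. apply H; auto; lia.
  - intros U1 U2 i H1 H2. pose proof (f_ssyt U1 H1) as F1. pose proof (f_ssyt U2 H2) as F2.
    change (edge (Lskew n Sp) U1 i U2) with
      (exists x, Sp x /\ U1 x = (U2 x + 1)%nat /\ i = U2 x /\ (forall y, y <> x -> U1 y = U2 y)).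
    rewrite (ssyt_edge n Km b an U1 U2 i H1 H2).
    split.
    + intros [Hi [c [r [Kc [B1 [B2 Ho]]]]]]. exists (n - i)%nat. split; [|lia].
      change (exists x, Sm x /\ fm U1 x = (fm U2 x + 1)%nat /\ (n - i)%nat = fm U2 x /\
                (forall y, y <> x -> fm U1 y = fm U2 y)).
      rewrite (ssyt_edge n Km a b (fm U1) (fm U2) (n - i) F1 F2).
      split; [lia|]. exists c, (r - Z.of_nat i). split; [auto|].
      fold (BS (fm U1) c). fold (BS (fm U2) c).
      assert (E: forall U, is_ssyt n Sp U -> BS (fm U) c (r - Z.of_nat i) (n - i) = BU U c r i).
      { intros U HU. rewrite BS_f; auto; [|lia]. f_equal; lia. }
      rewrite !E; auto. split; [auto|split; [auto|]].
      intros c' r' w' Kc' Hw' Hne. fold (BS (fm U1) c' r' w'). fold (BS (fm U2) c' r' w').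
      rewrite !BS_f; auto. apply Ho; auto; lia.
    + intros [j [Ej ->]].
      change (exists x, Sm x /\ fm U1 x = (fm U2 x + 1)%nat /\ j = fm U2 x /\
                (forall y, y <> x -> fm U1 y = fm U2 y)) in Ej.
      rewrite (ssyt_edge n Km a b (fm U1) (fm U2) j F1 F2) in Ej.
      destruct Ej as [Hj [c [r [Kc [B1 [B2 Ho]]]]]].
      split; [lia|]. exists c, (r + Z.of_nat (n - j)). split; [auto|].
      fold (BU U1 c). fold (BU U2 c).
      assert (E: forall U, is_ssyt n Sp U -> BU U c (r + Z.of_nat (n - j)) (n - j) = BS (fm U) c r j).
      { intros U HU. rewrite BU_f; auto; [|lia]. f_equal; lia. }
      rewrite !E; auto. split; [auto|split; [auto|]].
      intros c' r' w' Kc' Hw' Hne. fold (BU U1 c' r' w'). fold (BU U2 c' r' w').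
      rewrite (BU_f U1), (BU_f U2); auto. apply Ho; auto; lia.
Qed.
End Main.
Lemma iso_refl A : ec_iso A A.
Proof.
  exists (fun x => x). repeat split; eauto; tauto.
Qed.

Lemma iso_trans A B C : ec_iso A B -> ec_iso B C -> ec_iso A C.
Proof.
  intros [f (f1&f2&f3&f4&f5)] [g (g1&g2&g3&g4&g5)].
  exists (fun x => g (f x)). split; [|split; [|split; [|split]]].
  - auto.
  - intros x y Hx Hy E. apply f2; auto; apply g2; auto.
  - intros z Hz. destruct (g3 z Hz) as [y [Hy <-]]. destruct (f3 y Hy) as [x [Hx <-]]. eauto.
  - intros x y Hx Hy. rewrite f4, g4; auto. tauto.
  - intros x y i Hx Hy. rewrite f5, g5; auto. tauto.
Qed.

Lemma iso_sig0 n A B : ec_iso A B -> ec_iso (poset_sigma0 n A) (poset_sigma0 n B).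
Proof.
  intros [f (f1&f2&f3&f4&f5)]. exists f. simpl. split; [|split; [|split; [|split]]]; auto.
  intros x y i Hx Hy. split; intros [j [Hj ->]]; exists j; (split; [|auto]); apply f5; auto.
Qed.

Lemma iso_dual A B : ec_iso A B -> ec_iso (poset_dual A) (poset_dual B).
Proof.
  intros [f (f1&f2&f3&f4&f5)]. exists f. simpl. split; [|split; [|split; [|split]]]; auto.
Qed.

Lemma iso_sig0sig0 n S0 : ec_iso (poset_sigma0 n (poset_sigma0 n (Lskew n S0))) (Lskew n S0).
Proof.
  exists (fun x => x). simpl. split; [|split; [|split; [|split]]]; eauto; try tauto.
  intros x y i Hx Hy. split.
  - intros [j [[k [[z (Hz&E1&E2&E3)] ->]] ->]].
    assert (x z <= n)%nat by (apply Hx; auto).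
    replace (n - (n - k))%nat with k by lia. exists z; auto.
  - intros [z (Hz&E1&E2&E3)]. assert (x z <= n)%nat by (apply Hx; auto).
    exists (n - i)%nat. split; [|lia]. exists i. split; [exists z; auto|auto].
Qed.

Lemma ssyt_shape n S1 S2 T : (forall x, S1 x <-> S2 x) -> is_ssyt n S1 T -> is_ssyt n S2 T.
Proof.
  intros E (V&R&Rw&Cl). split; [|split; [|split]].
  - intros x Hx; apply V; rewrite E; auto.
  - intros x Hx; apply R; rewrite E; auto.
  - intros r c c' H1 H2; apply Rw; apply E; auto.
  - intros r r' c H1 H2; apply Cl; apply E; auto.
Qed.

Lemma iso_shape n S1 S2 : (forall x, S1 x <-> S2 x) -> ec_iso (Lskew n S1) (Lskew n S2).
Proof.
  intros E. exists (fun x => x). simpl.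
  split; [|split; [|split; [|split]]].
  - intros T; apply ssyt_shape; auto.
  - auto.
  - intros T HT. exists T. split; auto. apply (ssyt_shape n S2 S1); auto. intros x; rewrite E; tauto.
  - intros x y _ _. split; intros H z Hz; apply H, E; auto.
  - intros x y i _ _. split; intros [z (Hz&H)]; exists z; (split; [apply E; auto|auto]).
Qed.

Definition rotf (n : nat) (U : filling) : filling :=
  fun x => if (U (- fst x, - snd x) =? 0)%nat then 0%nat else (S n - U (- fst x, - snd x))%nat.

Lemma rot_ssyt n S1 S2 : (forall x, S2 x <-> S1 (- fst x, - snd x)) ->
  forall U, is_ssyt n S1 U -> is_ssyt n S2 (rotf n U).
Proof.
  intros E U (V&R&Rw&Cl). unfold rotf.
  assert (Hv: forall x, S2 x -> (1 <= U (- fst x, - snd x) <= n)%nat) by (intros x Hx; apply R, E; auto).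
  split; [|split; [|split]].
  - intros x Hx. rewrite V; auto. rewrite <- E; auto.
  - intros x Hx. pose proof (Hv x Hx). destruct (Nat.eqb_spec (U (- fst x, - snd x)) 0); lia.
  - intros r c c' H1 H2 Hc. pose proof (Hv _ H1). pose proof (Hv _ H2). cbn [fst snd] in *.
    assert (Nat.le (U (-r, -c')) (U (-r, -c))) by (apply Rw; [apply E in H2; exact H2|apply E in H1; exact H1|lia]).
    destruct (Nat.eqb_spec (U (-r,-c)) 0); destruct (Nat.eqb_spec (U (-r,-c')) 0); lia.
  - intros r r' c H1 H2 Hc. pose proof (Hv _ H1). pose proof (Hv _ H2). cbn [fst snd] in *.
    assert (Nat.lt (U (-r', -c)) (U (-r, -c))) by (apply Cl; [apply E in H2; exact H2|apply E in H1; exact H1|lia]).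
    destruct (Nat.eqb_spec (U (-r,-c)) 0); destruct (Nat.eqb_spec (U (-r',-c)) 0); lia.
Qed.

Lemma rot_val n S1 U x : is_ssyt n S1 U -> S1 (- fst x, - snd x) ->
  rotf n U x = (S n - U (- fst x, - snd x))%nat /\ (1 <= U (- fst x, - snd x) <= n)%nat.
Proof.
  intros (V&R&_) Hx. pose proof (R _ Hx). unfold rotf.
  destruct (Nat.eqb_spec (U (- fst x, - snd x)) 0); [lia|auto].
Qed.

Lemma negneg (x : cell) : (- fst (- fst x, - snd x), - snd (- fst x, - snd x)) = x.
Proof. destruct x; simpl; f_equal; lia. Qed.

Lemma rotrot n S1 U : is_ssyt n S1 U -> rotf n (rotf n U) = U.
Proof.
  intros HU. apply functional_extensionality. intros x. pose proof HU as (V&R&_).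
  destruct x as [r c]. unfold rotf. cbn [fst snd]. rewrite !Z.opp_involutive.
  destruct (Nat.eqb_spec (U (r,c)) 0) as [e|ne]; [rewrite e; reflexivity|].
  assert (U (r,c) <= n)%nat.
  { destruct (classic (S1 (r,c))) as [Hs|Hs]; [apply R; auto|]. rewrite V; auto; lia. }
  destruct (Nat.eqb_spec (S n - U (r,c)) 0); lia.
Qed.
Lemma rot_iso n S0 : ec_iso (Lskew n (shape_rot S0)) (poset_dual (poset_sigma0 n (Lskew n S0))).
Proof.
  assert (E1: forall x, S0 x <-> shape_rot S0 (- fst x, - snd x)).
  { intros [r c]; unfold shape_rot; cbn [fst snd]; rewrite !Z.opp_involutive; tauto. }
  assert (E2: forall x, shape_rot S0 x <-> S0 (- fst x, - snd x)) by (intros; unfold shape_rot; tauto).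
  exists (rotf n). simpl. split; [|split; [|split; [|split]]].
  - apply rot_ssyt; auto.
  - intros U1 U2 H1 H2 E. rewrite <- (rotrot n _ U1 H1), <- (rotrot n _ U2 H2), E; auto.
  - intros T HT. exists (rotf n T). split; [apply (rot_ssyt n S0); auto|apply (rotrot n S0); auto].
  - intros U1 U2 H1 H2. split.
    + intros H [r c] Hx. apply E1 in Hx.
      destruct (rot_val n _ U1 (r,c) H1 Hx) as [-> ?]. destruct (rot_val n _ U2 (r,c) H2 Hx) as [-> ?].
      pose proof (H _ Hx). lia.
    + intros H [r c] Hx. pose proof Hx as Hx'. apply E2 in Hx'. cbn [fst snd] in Hx'.
      pose proof (H _ Hx') as Q.
      assert (Hy: shape_rot S0 (- fst (-r,-c), - snd (-r,-c))) by (cbn [fst snd]; rewrite !Z.opp_involutive; auto).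
      destruct (rot_val n _ U1 (-r,-c) H1 Hy) as [E3 ?]. destruct (rot_val n _ U2 (-r,-c) H2 Hy) as [E4 ?].
      cbn [fst snd] in *. rewrite !Z.opp_involutive in *. lia.
  - intros U1 U2 i H1 H2. split.
    + intros [[r c] (Hx&Ea&Ei&Eo)]. exists (S n - U1 (r,c))%nat.
      assert (Hy: shape_rot S0 (- fst (-r,-c), - snd (-r,-c))) by (cbn [fst snd]; rewrite !Z.opp_involutive; auto).
      destruct (rot_val n _ U1 (-r,-c) H1 Hy) as [E3 ?]. destruct (rot_val n _ U2 (-r,-c) H2 Hy) as [E4 ?].
      cbn [fst snd] in *. rewrite !Z.opp_involutive in *.
      split; [|lia]. exists (-r,-c). split; [apply E1; cbn [fst snd]; rewrite !Z.opp_involutive; auto|].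
      split; [lia|split; [lia|]].
      intros [r' c'] Hne. unfold rotf. cbn [fst snd]. rewrite (Eo (-r', -c')); auto.
      intros Q; inversion Q; apply Hne; f_equal; lia.
    + intros [j [[[r c] (Hy&Ea&Ej&Eo)] ->]].
      pose proof Hy as Hx. apply E1 in Hx. cbn [fst snd] in Hx.
      destruct (rot_val n _ U1 (r,c) H1 Hx) as [E3 ?]. destruct (rot_val n _ U2 (r,c) H2 Hx) as [E4 ?].
      cbn [fst snd] in *. exists (-r,-c). split; [auto|]. split; [lia|split; [lia|]].
      intros [r' c'] Hne.
      assert (Q: rotf n U2 (-r',-c') = rotf n U1 (-r',-c')).
      { apply Eo. intros Q; inversion Q; apply Hne; f_equal; lia. }
      unfold rotf in Q. cbn [fst snd] in Q. rewrite !Z.opp_involutive in Q.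
      destruct (classic (shape_rot S0 (r',c'))) as [Hs|Hs].
      * destruct H1 as (_&R1&_), H2 as (_&R2&_). pose proof (R1 _ Hs). pose proof (R2 _ Hs).
        destruct (Nat.eqb_spec (U1 (r',c')) 0), (Nat.eqb_spec (U2 (r',c')) 0); lia.
      * destruct H1 as (V1&_), H2 as (V2&_). rewrite V1, V2; auto.
Qed.
Lemma filt_prefix (g : nat -> bool) m :
  (forall i j, (i <= j)%nat -> (j < m)%nat -> g j = true -> g i = true) ->
  forall i, (i < m)%nat -> (g i = true <-> (i < length (filter g (seq 0 m)))%nat).
Proof.
  induction m as [|m IH]; intros Hd i Hi; [lia|].
  rewrite seq_S, filter_app, length_app. simpl.
  assert (Hl: (length (filter g (seq 0 m)) <= m)%nat) by (rewrite <- (length_seq m 0) at 2; apply filter_length_le).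
  assert (IH': forall i, (i < m)%nat -> (g i = true <-> (i < length (filter g (seq 0 m)))%nat)).
  { apply IH. intros; apply (Hd i0 j); auto; lia. }
  destruct (g m) eqn:Gm; simpl.
  - assert (length (filter g (seq 0 m)) = m).
    { destruct (Nat.eq_dec (length (filter g (seq 0 m))) m); auto.
      assert (g (length (filter g (seq 0 m))) = true) by (apply (Hd _ m); auto; lia).
      apply IH' in H; lia. }
    split; [lia|]. intros _. destruct (Nat.eq_dec i m); [subst; auto|]. apply (Hd i m); auto; lia.
  - destruct (Nat.eq_dec i m); [subst; split; [congruence|lia]|]. rewrite IH'; [lia|lia].
Qed.

Lemma filt_interval A B m : (A <= B)%nat ->
  length (filter (fun i => (A <=? i)%nat && (i <? B)%nat) (seq 0 m)) = (Nat.min B m - Nat.min A m)%nat.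
Proof.
  intros HAB. induction m as [|m IH]; [simpl; lia|].
  rewrite seq_S, filter_app, length_app, IH. simpl.
  destruct (Nat.leb_spec A m), (Nat.ltb_spec m B); simpl; lia.
Qed.

Definition ncnt (L : list nat) (m : nat) (c : Z) : nat :=
  length (filter (fun i => c <=? Z.of_nat (nth i L 0%nat)) (seq 0 m)).

Lemma ncnt_spec L m c : length L = m -> weakly_decr L ->
  (ncnt L m c <= m)%nat /\ forall i, (i < m)%nat -> (c <= Z.of_nat (nth i L 0%nat) <-> (i < ncnt L m c)%nat).
Proof.
  intros Hl Hd. split.
  - unfold ncnt. rewrite <- (length_seq m 0) at 2; apply filter_length_le.
  - intros i Hi. unfold ncnt. rewrite <- filt_prefix; auto.
    + rewrite Z.leb_le; tauto.
    + intros i0 j Hij Hj G. rewrite Z.leb_le in *. pose proof (Hd i0 j Hij ltac:(lia)). lia.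
Qed.

Lemma row_val_nat L (i : nat) : row_val L (Z.of_nat i + 1) = Z.of_nat (nth i L 0%nat).
Proof. unfold row_val. f_equal. f_equal. lia. Qed.
Section Fin.
Variables (m n : nat) (P Q : list nat).
Hypothesis H2n : (2 <= n)%nat.
Hypothesis Hnm : (n <= m)%nat.
Hypothesis HlP : length P = m.
Hypothesis HlQ : length Q = m.
Hypothesis HdP : weakly_decr P.
Hypothesis HdQ : weakly_decr Q.
Hypothesis HQP : forall r, (r < m)%nat -> (nth r Q 0 <= nth r P 0)%nat.
Hypothesis Hcol : forall c, (col_count m P Q c <= n)%nat.

Definition na c := ncnt Q m c.
Definition nb c := ncnt P m c.
Definition aa c := Z.of_nat (na c).
Definition bb c := Z.of_nat (nb c).

Lemma naspec c : (na c <= m)%nat /\ forall i, (i < m)%nat -> (c <= Z.of_nat (nth i Q 0%nat) <-> (i < na c)%nat).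
Proof. apply ncnt_spec; auto. Qed.
Lemma nbspec c : (nb c <= m)%nat /\ forall i, (i < m)%nat -> (c <= Z.of_nat (nth i P 0%nat) <-> (i < nb c)%nat).
Proof. apply ncnt_spec; auto. Qed.

Lemma Hab' c : aa c <= bb c.
Proof.
  unfold aa, bb. destruct (naspec c) as [A1 A2], (nbspec c) as [B1 B2].
  destruct (na c) as [|k] eqn:E; [lia|].
  assert (k < m)%nat by lia. pose proof (proj2 (A2 k H) ltac:(lia)). pose proof (HQP k H).
  assert (k < nb c)%nat by (apply B2; auto; lia). lia.
Qed.

Lemma Hmono' c1 c2 : c1 < c2 -> aa c2 <= aa c1 /\ bb c2 <= bb c1.
Proof.
  intros Hc. unfold aa, bb. destruct (naspec c1) as [A1 A2], (nbspec c1) as [B1 B2].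
  destruct (naspec c2) as [A3 A4], (nbspec c2) as [B3 B4]. split.
  - destruct (na c2) as [|k] eqn:E; [lia|].
    assert (k < m)%nat by lia. pose proof (proj2 (A4 k H) ltac:(lia)).
    assert (k < na c1)%nat by (apply A2; auto; lia). lia.
  - destruct (nb c2) as [|k] eqn:E; [lia|].
    assert (k < m)%nat by lia. pose proof (proj2 (B4 k H) ltac:(lia)).
    assert (k < nb c1)%nat by (apply B2; auto; lia). lia.
Qed.

Lemma Hbn' c : bb c <= aa c + Z.of_nat n.
Proof.
  unfold aa, bb. destruct (naspec c) as [A1 A2], (nbspec c) as [B1 B2].
  destruct (Z_le_gt_dec c 0).
  - assert (m - 1 < na c)%nat by (apply A2; lia). lia.
  - pose proof (Hcol (Z.to_nat c)) as Hc. unfold col_count in Hc.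
    rewrite (filter_ext_in _ (fun i => (na c <=? i)%nat && (i <? nb c)%nat)) in Hc.
    + rewrite filt_interval in Hc; [lia|]. pose proof (Hab' c). unfold aa, bb in *. lia.
    + intros i Hi. apply in_seq in Hi. apply eq_iff_eq_true.
      rewrite !andb_true_iff, Nat.ltb_lt, !Nat.leb_le, Nat.ltb_lt.
      pose proof (A2 i ltac:(lia)). pose proof (B2 i ltac:(lia)). lia.
Qed.

Lemma col_iff r c : skew m P Q (r,c) <-> aa c < r <= bb c.
Proof.
  unfold skew, aa, bb. cbn [fst snd]. destruct (naspec c) as [A1 A2], (nbspec c) as [B1 B2].
  split.
  - intros [Hr [H1 H2]]. unfold row_val in *.
    set (i := (Z.to_nat r - 1)%nat) in *.
    pose proof (A2 i ltac:(lia)). pose proof (B2 i ltac:(lia)). lia.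
  - intros Hr. assert (1 <= r <= Z.of_nat m) by lia. split; auto. unfold row_val.
    set (i := (Z.to_nat r - 1)%nat) in *.
    pose proof (A2 i ltac:(lia)). pose proof (B2 i ltac:(lia)). lia.
Qed.

Lemma skew_Sh x : skew m P Q x <-> Sm aa bb x.
Proof.
  destruct x as [r c]. rewrite col_iff. unfold Sm, Sh, Km. cbn [fst snd]. rewrite Z.ltb_lt. lia.
Qed.

Lemma sig_Sh x : shape_sigma0 n (skew m P Q) x <-> Sp n aa bb x.
Proof.
  destruct x as [r c]. unfold shape_sigma0, Sp, Sh, Km, an. cbn [fst snd]. rewrite Z.ltb_lt. split.
  - intros [a' [k [Hk [Hiff Hr]]]].
    assert (X1 := proj2 (Hiff (a' + 1)) ltac:(lia)). rewrite col_iff in X1.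
    assert (X2 := proj2 (Hiff (a' + Z.of_nat k)) ltac:(lia)). rewrite col_iff in X2.
    assert (X3 := proj1 (Hiff (aa c + 1))). rewrite col_iff in X3.
    assert (X4 := proj1 (Hiff (bb c))). rewrite col_iff in X4.
    specialize (X3 ltac:(lia)). specialize (X4 ltac:(lia)). lia.
  - intros [Hk Hr]. exists (aa c), (Z.to_nat (bb c - aa c)). split; [lia|split; [|lia]].
    intros r'. rewrite col_iff. lia.
Qed.

Lemma sig_iso : ec_iso (Lskew n (shape_sigma0 n (skew m P Q))) (poset_sigma0 n (Lskew n (skew m P Q))).
Proof.
  apply iso_trans with (Lskew n (Sp n aa bb)); [apply iso_shape, sig_Sh|].
  apply iso_trans with (poset_sigma0 n (Lskew n (Sm aa bb))).
  - apply main_iso; [exact Hab'|exact Hbn'|exact Hmono'].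
  - apply iso_sig0, iso_shape. intros x; rewrite skew_Sh; tauto.
Qed.

End Fin.

Close Scope Z_scope.

Theorem proposition8p2 (m n : nat) (P Q : list nat) :
  (2 <= n)%nat -> (n <= m)%nat ->
  length P = m -> length Q = m ->
  weakly_decr P -> weakly_decr Q ->
  (forall r, (r < m)%nat -> (nth r Q 0 <= nth r P 0)%nat) ->
  (forall c, (col_count m P Q c <= n)%nat) ->
  forall o : op,
    ec_iso (Lskew n (shape_op n o (skew m P Q)))
           (poset_op n o (Lskew n (skew m P Q))).
Proof.
  intros H1 H2 H3 H4 H5 H6 H7 H8 o. destruct o; cbn [shape_op poset_op].
  - apply iso_refl.
  - apply sig_iso; auto.
  - apply iso_trans with (poset_dual (poset_sigma0 n (Lskew n (shape_sigma0 n (skew m P Q))))).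
    + apply rot_iso.
    + apply iso_trans with (poset_dual (poset_sigma0 n (poset_sigma0 n (Lskew n (skew m P Q))))).
      * apply iso_dual, iso_sig0, sig_iso; auto.
      * apply iso_dual, iso_sig0sig0.
  - apply rot_iso.
Qed.
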